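(* Let $n\ge 4$ be an integer and let $QD_{2^n}=\langle a,b : a^{2^{n-1}}=b^2=1,\ bab^{-1}=a^{2^{n-2}-1}\rangle$ be the quasidihedral group of order $2^n$. Let $\Gamma_{QD_{2^n}}$ be its non-commuting graph. Let $t_1,t_2$ be the two roots of the equation $(2^{n-1}-2)x^2-(2^n-10)x-2^{n-1}=0$. Then the spectrum of the distance signless Laplacian matrix $D^Q(\Gamma_{QD_{2^n}})$ (eigenvalues counted with multiplicity, multiplicities being added if two of the listed values coincide) consists of: (a) $2^n-4$ with multiplicity $2^{n-2}$; (b) $2^n-2$ with multiplicity $2^{n-2}-1$; (c) $2^n+2^{n-1}-8$ with multiplicity $2^{n-1}-3$; (d) $t_k(2^{n-1}-2)+3\cdot 2^{n-1}-2$ with multiplicity $1$, for each $k=1,2$.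
   Context: For a finite non-abelian group $G$ with centre $Z(G)$, the non-commuting graph $\Gamma_G$ is the simple undirected graph with vertex set $G\setminus Z(G)$, in which two distinct vertices $u,v$ are adjacent if and only if $uv\ne vu$. For a connected graph $H$, $d_{uv}$ denotes the length of a shortest path between $u$ and $v$; the distance matrix $D(H)$ has $(u,v)$-entry $d_{uv}$. The transmission of a vertex $v$ is $\sum_{u} d_{uv}$, and $Tr(H)$ is the diagonal matrix of vertex transmissions. The distance signless Laplacian matrix is $D^Q(H)=Tr(H)+D(H)$. *)

(* Defs.v *)
From HB Require Import structures.
From mathcomp Require Import all_boot all_order all_algebra all_fingroup all_solvable center extremal.
Set Implicit Arguments. Unset Strict Implicit. Unset Printing Implicit Defensive.
Import GRing.Theory.

Section NonCommutingGraph.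
Variables (gT : finGroupType) (G : {group gT}).

Definition ncV : {set gT} := (G :\: 'Z(G))%g.

(* adjacency: distinct vertices that do not commute (uv <> vu forces u <> v) *)
Definition nc_adj (x y : gT) : bool :=
  [&& x \in ncV, y \in ncV & (x * y != y * x)%g].

Fixpoint nc_reach (k : nat) (x y : gT) : bool :=
  if k is k'.+1 then nc_reach k' x y || [exists z, nc_reach k' x z && nc_adj z y]
  else x == y.

(* graph distance: least k such that y is reachable from x in at most k steps
   (searched in 0 .. #|gT|-1, which suffices since walks can be shortened
   to paths; the graph is connected in the case considered). *)
Definition nc_dist (x y : gT) : nat :=
  find (fun k => nc_reach k x y) (iota 0 #|gT|).

Definition nc_vert (i : 'I_#|ncV|) : gT := enum_val i.

Variable R : nzRingType.
Local Open Scope ring_scope.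

Definition nc_D : 'M[R]_#|ncV| :=
  \matrix_(i, j) (nc_dist (nc_vert i) (nc_vert j))%:R.

Definition nc_transmission (i : 'I_#|ncV|) : R := \sum_j nc_D i j.

Definition nc_DQ : 'M[R]_#|ncV| :=
  diag_mx (\row_i nc_transmission i) + nc_D.

End NonCommutingGraph.

(* Main.v *)
Require Import Defs.
From HB Require Import structures.
From mathcomp Require Import all_boot all_order all_algebra all_fingroup all_solvable center extremal.
Import GRing.Theory.
Local Open Scope ring_scope.
From mathcomp Require Import ring lra zify.
Import Num.Theory.
Set Implicit Arguments. Unset Strict Implicit. Unset Printing Implicit Defensive.

Section RingPart1.
Local Open Scope ring_scope.

Definition dnat m (S : {set 'I_m}) (p : 'I_m -> 'I_m) (i j : 'I_m) : nat :=
  if i == j then 0%N else if i \in S then (if j \in S then 2%N else 1%N)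
  else (if j == p i then 2%N else 1%N).

Definition Dg (R : nzRingType) m (S : {set 'I_m}) p : 'M[R]_m :=
  \matrix_(i,j) (dnat S p i j)%:R.
Definition DQg (R : nzRingType) m (S : {set 'I_m}) p : 'M[R]_m :=
  diag_mx (\row_i \sum_j Dg R S p i j) + Dg R S p.

Definition good m (S : {set 'I_m}) (p : 'I_m -> 'I_m) :=
  forall i, i \notin S -> [/\ p i \notin S, p i != i & p (p i) = i].

Lemma sumS (R : nzRingType) m (S : {set 'I_m}) (a b : R) :
  \sum_j (if j \in S then a else b) = a *+ #|S| + b *+ #|~: S|.
Proof.
rewrite (bigID (fun j => j \in S)) /=; congr (_ + _).
  by rewrite -sumr_const; apply: eq_bigr => j ->.
rewrite -sumr_const; apply: eq_big => j; first by rewrite inE.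
by move/negbTE->.
Qed.

Lemma sum_delta (R : nzRingType) m (c : 'I_m) (f : 'I_m -> R) :
  \sum_j (j == c)%:R * f j = f c.
Proof.
rewrite (bigD1 c) //= eqxx mul1r big1 ?addr0 // => j /negbTE ->.
by rewrite mul0r.
Qed.

Lemma sum_delta1 (R : nzRingType) m (c : 'I_m) :
  \sum_j (j == c)%:R = 1 :> R.
Proof.
transitivity (\sum_j (j == c)%:R * (1:R)); first by apply: eq_bigr => j _; rewrite mulr1.
exact: sum_delta.
Qed.

Lemma trans_val (R : comNzRingType) m (S : {set 'I_m}) p k i :
  good S p -> #|~: S| = (k + k)%N ->
  \sum_j Dg R S p i j = if i \in S then #|S|%:R * 2 + k%:R * 2 - 2
                        else #|S|%:R + k%:R * 2.
Proof.
move=> gd hk.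
case: ifP => iS.
  rewrite (eq_bigr (fun j => (if j \in S then 2 else 1) - (j == i)%:R * 2)); last first.
    move=> j _; rewrite mxE /dnat iS eq_sym.
    by case: eqP => [->|_]; rewrite ?iS ?mul1r ?subrr ?mul0r ?subr0 //; case: (j \in S).
  rewrite sumrB sumS sum_delta hk natrD.
  by rewrite -mulr_natr; ring.
have [pS pn pp] := gd i (negbT iS).
rewrite (eq_bigr (fun j => 1 - (j == i)%:R + (j == p i)%:R)); last first.
  move=> j _; rewrite mxE /dnat iS eq_sym.
  case: eqP => [->|ji]; first by rewrite eq_sym (negbTE pn) /=; ring.
  by case: (j == p i) => /=; ring.
rewrite big_split sumrB /= !sum_delta1 sumr_const card_ord subrK.
have hm : (m%:R : R) = #|S|%:R + #|~:S|%:R by rewrite -natrD cardsC cardT size_enum_ord.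
by rewrite -mulr_natr mul1r hm hk natrD; ring.
Qed.

Definition c1 (R : nzRingType) m (S : {set 'I_m}) k : R := #|S|%:R * 2 + k%:R * 2 - 4.
Definition c2 (R : nzRingType) m (S : {set 'I_m}) k : R := #|S|%:R + k%:R * 2 - 1.
Definition Pm (R : nzRingType) m (S : {set 'I_m}) p : 'M[R]_m :=
  \matrix_(i,j) ((i \notin S)%:R * (j == p i)%:R).
Definition Km (R : nzRingType) m (S : {set 'I_m}) p k : 'M[R]_m :=
  diag_mx (\row_i (if i \in S then c1 R S k else c2 R S k)) + Pm R S p.
Definition Um (R : nzRingType) m (S : {set 'I_m}) : 'M[R]_(m,2) :=
  \matrix_(i, a) (if a == 0 then (i \in S)%:R else (i \notin S)%:R).
Definition Ym (R : nzRingType) m (S : {set 'I_m}) : 'M[R]_(2,m) :=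
  \matrix_(a, j) (if a == 0 then (if j \in S then 2 else 1) else 1).

Lemma DQg_dec (R : comNzRingType) m (S : {set 'I_m}) p k :
  good S p -> #|~: S| = (k + k)%N ->
  DQg R S p = Km R S p k + Um R S *m Ym R S.
Proof.
move=> gd hk; apply/matrixP => i j.
rewrite /DQg /Km !mxE (trans_val _ _ gd hk) !big_ord_recl big_ord0 !mxE /=.
rewrite /dnat /c1 /c2.
case: (eqVneq i j) => [<-|ij] /=.
  case: (boolP (i \in S)) => iS /=.
    ring.
  have [pS pn pp] := gd i iS; rewrite eq_sym (negbTE pn) /=; ring.
case: (boolP (i \in S)) => iS /=; case: (boolP (j \in S)) => jS /=.
- ring.
- ring.
- have [pS pn pp] := gd i iS; have -> : (j == p i) = false.
    by apply/negbTE; apply: contraNneq pS => <-.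
  by rewrite /=; ring.
- by case: (j == p i) => /=; ring.
Qed.

Lemma prodS (R : comNzRingType) m (S : {set 'I_m}) (a b : R) :
  \prod_j (if j \in S then a else b) = a ^+ #|S| * b ^+ #|~: S|.
Proof.
rewrite (bigID (fun j => j \in S)) /=; congr (_ * _).
  by rewrite -prodr_const; apply: eq_bigr => j ->.
rewrite -prodr_const; apply: eq_big => j; first by rewrite inE.
by move/negbTE->.
Qed.

Lemma charK (R : realFieldType) m (S : {set 'I_m}) p k :
  good S p -> #|~: S| = (k + k)%N ->
  char_poly (Km R S p k) = ('X - (c1 R S k)%:P) ^+ #|S| *
     (('X - (c2 R S k + 1)%:P) * ('X - (c2 R S k - 1)%:P)) ^+ k.
Proof.
move=> gd hk.
set a1 := c1 R S k; set a2 := c2 R S k.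
set T := (_ * _).
pose d (i : 'I_m) : {poly R} := 'X - (if i \in S then a1 else a2)%:P.
pose Dp : 'M[{poly R}]_m := diag_mx (\row_i d i).
pose Pp : 'M[{poly R}]_m := map_mx polyC (Pm R S p).
pose sg (i : 'I_m) : {poly R} := if (i \in S) || (i < p i)%N then 1 else -1.
pose Sg : 'M[{poly R}]_m := diag_mx (\row_i sg i).
have sg2 i : sg i * sg i = 1 by rewrite /sg; case: ifP; rewrite ?mulr1 ?mulrNN ?mulr1.
have PpE i j : Pp i j = (i \notin S)%:R * (j == p i)%:R.
  by rewrite /Pp !mxE polyCM !polyC_natr.
have cpE : char_poly_mx (Km R S p k) = Dp - Pp.
  apply/matrixP => i j; rewrite /char_poly_mx /Km /Dp /Pp !mxE.
  rewrite polyCD polyCMn /d; case: (i == j); rewrite ?mulr1n ?mulr0n ?polyC0; ring.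
have SgSg : Sg *m Sg = 1%:M.
  apply/matrixP => i j; rewrite mul_diag_mx !mxE.
  by case: (i == j); rewrite ?mulr1n ?mulr0n ?sg2 ?mulr0.
have conj : Sg *m (Dp - Pp) *m Sg = Dp + Pp.
  apply/matrixP => i j; rewrite mul_mx_diag mul_diag_mx !mxE polyCM !polyC_natr.
  case: (eqVneq i j) => [<-|ij].
    rewrite /= !mulr1n.
    case: (boolP (i \in S)) => iS /=.
      by rewrite mul0r subr0 addr0 mulrC mulrA sg2 mul1r.
    have [pS pn pp] := gd i iS; rewrite eq_sym (negbTE pn) !mulr0 subr0 addr0.
    by rewrite mulrC mulrA sg2 mul1r.
  rewrite /= !mulr0n sub0r add0r.
  case: (boolP (i \in S)) => iS /=; first by rewrite !mul0r oppr0 !(mul0r, mulr0).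
  have [pS pn pp] := gd i iS.
  case: (eqVneq j (p i)) => [->|jp]; last by rewrite !mulr0 oppr0 !(mul0r, mulr0).
  rewrite !mul1r /sg (negbTE iS) (negbTE pS) /= pp.
  case: (ltngtP i (p i)) => h.
  - ring.
  - ring.
  - by move/eqP: pn => []; apply: val_inj; rewrite /= -h.
have DPc : Dp *m Pp = Pp *m Dp.
  apply/matrixP => i j; rewrite mul_mx_diag mul_diag_mx !mxE polyCM !polyC_natr.
  case: (boolP (i \in S)) => iS /=; first by rewrite !(mul0r, mulr0).
  have [pS pn pp] := gd i iS.
  case: (eqVneq j (p i)) => [->|jp]; last by rewrite !(mul0r, mulr0).
  by rewrite /d (negbTE iS) (negbTE pS) mulrC.
have PP : Pp *m Pp = diag_mx (\row_i (i \notin S)%:R).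
  apply/matrixP => i j; rewrite !mxE.
  rewrite (eq_bigr (fun l => (l == p i)%:R * ((i \notin S)%:R * Pp l j))); last first.
    by move=> l _; rewrite [Pp i l]PpE -mulrA mulrCA.
  rewrite sum_delta PpE.
  case: (boolP (i \in S)) => iS /=; first by rewrite !mul0r; case: (i == j).
  have [pS pn pp] := gd i iS; rewrite pS pp eq_sym !mul1r.
  by case: (i == j).
have DD : Dp *m Dp = diag_mx (\row_i (d i ^+ 2)).
  apply/matrixP => i j; rewrite mul_diag_mx !mxE.
  by case: (i == j); rewrite ?mulr1n ?mulr0n ?mulr0 ?expr2.
have prodE : (Dp - Pp) *m (Dp + Pp) = diag_mx (\row_i (d i ^+ 2 - (i \notin S)%:R)).
  rewrite mulmxDr !mulmxBl DD PP DPc.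
  apply/matrixP => i j; rewrite !mxE.
  case: (i == j); rewrite ?mulr1n ?mulr0n; ring.
have sq : char_poly (Km R S p k) ^+ 2 = T ^+ 2.
  rewrite expr2 {2}/char_poly cpE.
  have -> : \det (Dp - Pp) = \det (Dp + Pp).
    rewrite -conj !det_mulmx mulrC mulrA -det_mulmx SgSg det1 mul1r //.
  rewrite /char_poly cpE -det_mulmx prodE det_diag.
  rewrite (eq_bigr (fun i => if i \in S then ('X - a1%:P) ^+ 2 else ('X - a2%:P) ^+ 2 - 1)); last first.
    by move=> i _; rewrite !mxE /d; case: (i \in S) => /=; rewrite ?subr0.
  have e : ('X - a2%:P) ^+ 2 - 1 = ('X - (a2 + 1)%:P) * ('X - (a2 - 1)%:P).
    rewrite [(a2 + 1)%:P]polyCD [(a2 - 1)%:P]polyCB polyC1; ring.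
  by rewrite prodS hk /T e exprMn exprD; ring.
have cpm : char_poly (Km R S p k) \is monic := char_poly_monic _.
have Tm : T \is monic.
  by rewrite monicMl ?monic_exp ?monicXsubC // monicMl ?monicXsubC.
move/eqP: sq; rewrite eqf_sqr => /orP[/eqP //|/eqP h].
move: cpm; rewrite h monicE lead_coefN (monicP Tm) => /eqP h2.
exfalso; have h3 : (-1 : R) = 1 := h2. clear -h3. lra.
Qed.

Lemma det2 (R : comNzRingType) (A : 'M[R]_2) : \det A = A 0 0 * A 1 1 - A 0 1 * A 1 0.
Proof.
rewrite (expand_det_row _ 0) !big_ord_recl big_ord0 addr0 /cofactor !det_mx11 /=.
rewrite !mxE /= expr0 mul1r expr1 mulN1r mulrN.
by congr (A _ _ * A _ _ - A _ _ * A _ _); apply: val_inj.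
Qed.

Lemma det_sylvester (R : comNzRingType) m k (A : 'M[R]_(m,k)) (B : 'M[R]_(k,m)) :
  \det (1%:M - A *m B) = \det (1%:M - B *m A).
Proof.
have e1 : block_mx 1%:M A 0 1%:M *m block_mx (1%:M - A *m B) 0 B 1%:M
   = block_mx 1%:M 0 B 1%:M *m block_mx 1%:M A 0 (1%:M - B *m A).
  rewrite !mulmx_block !mul1mx !mul0mx ?mulmx1 ?mulmx0 ?addr0 ?add0r.
  by rewrite subrK addrC subrK.
have := congr1 determinant e1.
by rewrite !det_mulmx det_ublock det_lblock det_lblock det_ublock !det1 !mul1r !mulr1.
Qed.

Lemma char_poly_horner (R : comNzRingType) m (M : 'M[R]_m) x :
  (char_poly M).[x] = \det (x%:M - M).
Proof.
rewrite /char_poly -horner_evalE -det_map_mx; apply: congr1; apply/matrixP=> i j.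
by rewrite !mxE /= horner_evalE hornerD hornerN hornerMn hornerX hornerC.
Qed.
Lemma poly_eq_ev (R : realFieldType) (p q : {poly R}) (e1 e2 e3 : R) :
  (forall x, x != e1 -> x != e2 -> x != e3 -> p.[x] = q.[x]) -> p = q.
Proof.
move=> H.
pose f := (p - q) * (('X - e1%:P) * ('X - e2%:P) * ('X - e3%:P)).
have f0 : f = 0.
  apply/eqP; apply/negPn/negP => fn0.
  pose s := [seq (i%:R : R) | i <- iota 0 (size f)].
  have hr : all (root f) s.
    apply/allP => y _; rewrite /root /f !(hornerM, hornerXsubC, hornerD, hornerN).
    have [->|h1] := eqVneq y e1; first by rewrite subrr !(mulr0,mul0r).
    have [->|h2] := eqVneq y e2; first by rewrite subrr !(mulr0,mul0r).
    have [->|h3] := eqVneq y e3; first by rewrite subrr !(mulr0,mul0r).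
    by rewrite H // subrr mul0r.
  have hu : uniq s.
    by rewrite map_inj_uniq ?iota_uniq // => a b /eqP; rewrite eqr_nat => /eqP.
  by have := max_poly_roots fn0 hr hu; rewrite size_map size_iota ltnn.
move/eqP: f0; rewrite mulf_eq0 => /orP[]; first by rewrite subr_eq0 => /eqP.
move=> /eqP h; have : (('X - e1%:P) * ('X - e2%:P) * ('X - e3%:P) : {poly R}) \is monic.
  by rewrite !monicMl ?monicXsubC.
by rewrite h monicE lead_coef0 eq_sym oner_eq0.
Qed.


Lemma sumS' (R : nzRingType) m (S : {set 'I_m}) (F : 'I_m -> R) (a b : R) :
  (forall j, F j = if j \in S then a else b) ->
  \sum_j F j = a *+ #|S| + b *+ #|~: S|.
Proof. by move=> h; rewrite -sumS; apply: eq_bigr => j _; rewrite h. Qed.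

Lemma DQg_ev (R : realFieldType) m (S : {set 'I_m}) p k (x : R) :
  good S p -> #|~: S| = (k + k)%N -> (0 < k)%N -> (0 < #|S|)%N ->
  x - (#|S|%:R * 2 + k%:R * 2 - 4) != 0 -> x - (#|S|%:R + k%:R * 2) != 0 ->
  x - (#|S|%:R + k%:R * 2 - 2) != 0 ->
  (char_poly (DQg R S p)).[x] =
    (x - (#|S|%:R * 2 + k%:R * 2 - 4)) ^+ #|S|.-1 * (x - (#|S|%:R + k%:R * 2)) ^+ k.-1
    * (x - (#|S|%:R + k%:R * 2 - 2)) ^+ k
    * ((x - (#|S|%:R * 4 + k%:R * 2 - 4)) * (x - (#|S|%:R + k%:R * 4)) - k%:R * #|S|%:R * 2).
Proof.
move=> gd hk k0 s0 hu hw hw2.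
set s := (#|S|%:R : R) in hu hw hw2 *; set kk := (k%:R : R) in hu hw hw2 *.
set u := x - _ in hu *; set w := x - (s + kk * 2) in hw *.
rewrite char_poly_horner (DQg_dec R gd hk).
pose A := x%:M - Km R S p k.
pose U' : 'M[R]_(m, 2) := \matrix_(i, a) (if a == 0 then (i \in S)%:R / u else (i \notin S)%:R / w).
have AU : A *m U' = Um R S.
  have -> : A = diag_mx (\row_i (x - (if i \in S then c1 R S k else c2 R S k))) - Pm R S p.
    apply/matrixP => i j; rewrite /A /Km !mxE.
    by case: (i == j) => /=; rewrite ?(mulr1n, mulr0n, subr0, oppr0, sub0r, opprD, addrA, add0r); reflexivity.
  apply/matrixP => i a; rewrite mulmxBl mul_diag_mx !mxE.
  rewrite (eq_bigr (fun j => (j == p i)%:R * ((i \notin S)%:R * U' j a))); last first.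
    by move=> j _; rewrite !mxE -mulrA mulrCA.
  rewrite sum_delta /U' !mxE.
  case: (boolP (i \in S)) => iS /=.
    rewrite !mul0r subr0; case: (a == 0); rewrite ?mulr0 // mul1r /c1.
    by rewrite mulrC mulVf.
  have [pS pn pp] := gd i iS; rewrite pS !mul1r.
  case: (a == 0) => /=; first by rewrite (negbTE pS) !mul0r mulr0 subrr.
  by rewrite /c2 -/kk -/s /w; field.
have e : x%:M - (Km R S p k + Um R S *m Ym R S) = A *m (1%:M - U' *m Ym R S).
  by rewrite mulmxBr mulmx1 mulmxA AU opprD addrA.
rewrite e det_mulmx det_sylvester det2 /A -char_poly_horner charK //.
rewrite !mxE /=.
have side : forall (F : 'I_m -> R) a b, (forall j, F j = if j \in S then a else b) ->
  \sum_j F j = a *+ #|S| + b *+ #|~: S| by move=> F a b; apply: sumS'.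
rewrite (side _ (2 / u) 0); last by move=> j; rewrite /U' !mxE /=; case: (j \in S) => /=; ring.
rewrite (side _ 0 (1 / w)); last by move=> j; rewrite /U' !mxE /=; case: (j \in S) => /=; ring.
rewrite (side _ 0 (1 / w)); last by move=> j; rewrite /U' !mxE /=; case: (j \in S) => /=; ring.
rewrite (side _ (1 / u) 0); last by move=> j; rewrite /U' !mxE /=; case: (j \in S) => /=; ring.
rewrite !hornerE hk !mul0rn !addr0 !add0r -(mulr_natr (2 / u)) -(mulr_natr w^-1) -(mulr_natr u^-1) natrD -/s -/kk.
have -> : x - c1 R S k = u by [].
have -> : x - (c2 R S k + 1) = w by rewrite /c2 /w -/s -/kk; ring.
have -> : x - (c2 R S k - 1) = x - (s + kk * 2 - 2) by rewrite /c2 -/s -/kk; ring.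
have -> : u ^+ #|S| = u * u ^+ #|S|.-1 by rewrite -exprS prednK.
rewrite exprMn.
have -> : w ^+ k = w * w ^+ k.-1 by rewrite -exprS prednK.
have -> : x - (s * 4 + kk * 2 - 4) = u - s * 2 by rewrite /u; ring.
have -> : x - (s + kk * 4) = w - kk * 2 by rewrite /w; ring.
have key : u * w * ((1 - 2 / u * s) * (1 - w^-1 * (kk + kk)) - - (w^-1 * (kk + kk)) * - (u^-1 * s))
   = (u - s * 2) * (w - kk * 2) - kk * s * 2.
  clearbody u w; field; by rewrite hu hw.
rewrite -key.
set A1 := u ^+ _; set A2 := w ^+ _; set A3 := (_ - _) ^+ k.
clearbody A1 A2 A3 u w; ring.
Qed.

End RingPart1.

Section GroupPart.
Local Open Scope group_scope.

Lemma cyc_comm (gT : finGroupType) (x u v : gT) : u \in <[x]> -> v \in <[x]> -> commute u v.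
Proof. by case/cycleP => i -> /cycleP [j ->]; apply: commuteX2. Qed.

Lemma notX_form (gT : finGroupType) (x y t : gT) :
  <[x]> * <[y]> = [set: gT] -> y ^+ 2 = 1 -> t \notin <[x]> ->
  exists2 z, z \in <[x]> & t = z * y.
Proof.
move=> hXY hy2 htX.
have : t \in <[x]> * <[y]> by rewrite hXY inE.
case/mulsgP => z b hz /cycleP [i ->] def_t; exists z => //.
have e : y ^+ i = y ^+ (odd i).
  by rewrite {1}(divn_eq i 2) expgD mulnC expgM hy2 expg1n mul1g modn2.
move: htX; rewrite def_t e; case: (odd i) => //=.
by rewrite expg0 mulg1 hz.
Qed.

Lemma nc_XB (gT : finGroupType) (x y z t : gT) :
  <[x]> * <[y]> = [set: gT] -> y ^+ 2 = 1 ->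
  z \in <[x]> -> z \notin 'Z([set: gT]) -> t \notin <[x]> -> z * t != t * z.
Proof.
move=> hXY hy2 hz hzZ htX; apply/negP => /eqP hzt.
case: (notX_form hXY hy2 htX) => z' hz' def_t.
have czz : commute z z' by apply: cyc_comm hz hz'.
have czy : commute z y.
  apply: (mulgI z').
  by rewrite mulgA -czz -mulgA -def_t hzt def_t -mulgA.
apply: (negP hzZ); apply/centerP; split; first by rewrite inE.
move=> g _; have : g \in <[x]> * <[y]> by rewrite hXY inE.
case/mulsgP => a b ha hb ->.
apply: commuteM; first by apply: cyc_comm hz ha.
by case/cycleP: hb => i ->; apply: commuteX.
Qed.

Lemma nc_BB (gT : finGroupType) (x y c t1 t2 : gT) :
  <[x]> * <[y]> = [set: gT] -> y ^+ 2 = 1 -> 'Z([set: gT]) = [set 1; c] ->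
  t1 \notin <[x]> -> t2 \notin <[x]> ->
  (t1 * t2 == t2 * t1) = (t2 == t1) || (t2 == c * t1).
Proof.
move=> hXY hy2 hZ h1 h2.
case: (notX_form hXY hy2 h1) => z1 hz1 d1.
case: (notX_form hXY hy2 h2) => z2 hz2 d2.
set w := z2 * z1^-1.
have hw : w \in <[x]> by rewrite groupM ?groupV.
have d2' : t2 = w * t1 by rewrite d2 d1 /w mulgA mulgKV.
have -> : (t1 * t2 == t2 * t1) = (t1 * w == w * t1).
  rewrite d2'; apply/idP/idP => /eqP h; apply/eqP.
    by apply: (mulIg t1); rewrite -mulgA h.
  by rewrite mulgA h.
have -> : (t2 == t1) || (t2 == c * t1) = (w \in 'Z([set: gT])).
  by rewrite hZ !inE d2' -{2}(mul1g t1) !(inj_eq (mulIg _)).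
case: (boolP (w \in 'Z([set: gT]))) => wZ.
  by case/centerP: wZ => _ /(_ t1 (in_setT _)) ->; rewrite eqxx.
by apply/negbTE; rewrite eq_sym (nc_XB hXY hy2 hw wZ h1).
Qed.

Lemma reach1 (gT : finGroupType) (G : {group gT}) u v :
  nc_reach G 1 u v = (u == v) || nc_adj G u v.
Proof.
rewrite /=; congr (_ || _); apply/existsP/idP => [[z /andP[/eqP-> //]] | h].
by exists u; rewrite eqxx h.
Qed.

Lemma reach0 (gT : finGroupType) (G : {group gT}) u v :
  nc_reach G 0 u v = (u == v).
Proof. by []. Qed.

Lemma reach2 (gT : finGroupType) (G : {group gT}) u v :
  nc_reach G 2 u v = nc_reach G 1 u v || [exists z, nc_reach G 1 u z && nc_adj G z v].
Proof. by []. Qed.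

Local Arguments nc_reach : simpl never.

Lemma dist_0 (gT : finGroupType) (G : {group gT}) u : nc_dist G u u = 0%N.
Proof.
rewrite /nc_dist; have h : (0 < #|gT|)%N by apply/card_gt0P; exists 1.
by case: #|gT| h => // m' _ /=; rewrite reach0 eqxx.
Qed.

Lemma dist_1 (gT : finGroupType) (G : {group gT}) u v :
  (2 < #|gT|)%N -> u != v -> nc_adj G u v -> nc_dist G u v = 1%N.
Proof.
rewrite /nc_dist => h uv a; case: #|gT| h => [|[|[|m']]] // _ /=.
by rewrite reach0 (negbTE uv) reach1 a orbT.
Qed.

Lemma dist_2 (gT : finGroupType) (G : {group gT}) u v w :
  (2 < #|gT|)%N -> u != v -> ~~ nc_adj G u v -> nc_adj G u w -> nc_adj G w v ->
  nc_dist G u v = 2%N.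
Proof.
rewrite /nc_dist => h uv na a1 a2; case: #|gT| h => [|[|[|m']]] // _ /=.
rewrite reach0 (negbTE uv) reach1 (negbTE uv) (negbTE na) reach2 reach1 (negbTE uv) (negbTE na) /=.
have -> : [exists z, nc_reach G 1 u z && nc_adj G z v] by apply/existsP; exists w; rewrite reach1 a1 orbT a2.
by [].
Qed.

Lemma sd_setup (gT : finGroupType) n : (3 < n)%N -> [set: gT]%G \isog [set: 'SD_(2 ^ n)] ->
  exists x, exists y, exists c : gT,
   [/\ <[x]> * <[y]> = [set: gT], y ^+ 2 = 1, 'Z([set: gT]) = [set 1; c],
       c \in <[x]> & c != 1] /\
     [/\ c * c = 1, y \notin <[x]>, x \notin 'Z([set: gT]), #[x] = (2 ^ n.-1)%N & #|gT| = (2 ^ n)%N].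
Proof.
move=> n3 iso.
have [[x y] genG [oy _]] := generators_semidihedral n3 iso.
have [_ _ [hZ cZ _ _] _ _] := semidihedral_structure n3 genG iso oy.
have [_ _ _ defXY _] := extremal_generators_facts (isT : prime 2) genG.
have [oG _ ox /setDP [_ hyX]] := genG.
set c := x ^+ (2 ^ n.-2).
have oc : #[c] = 2%N by rewrite /order -hZ.
exists x, y, c; split; split => //.
- by rewrite -oy expg_order.
- by rewrite hZ cycle2g.
- exact: mem_cycle.
- by apply/eqP => c1; move: oc; rewrite c1 order1.
- by rewrite -expg2 -[2%N]oc expg_order.
- apply/negP => xZ.
  have : (#|<[x]>| <= #|'Z([set: gT])|)%N.
    by apply: subset_leq_card; rewrite cycle_subG.
  rewrite cZ -/(#[x]) ox.
  case: n n3 {genG oG ox hZ cZ iso oy c oc} => [|[|[|[|n']]]] //= _.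
  by rewrite !expnS; lia.
- by rewrite -cardsT oG.
Qed.


Lemma card_enum_pre (T : finType) (A B : {set T}) :
  #|[set i : 'I_#|A| | enum_val i \in B]| = #|A :&: B|.
Proof.
rewrite -(card_imset _ enum_val_inj); apply: eq_card => v.
rewrite inE; apply/imsetP/andP => [[i]|[hA hB]].
  by rewrite inE => hB ->; split => //; exact: enum_valP.
by exists (enum_rank_in hA v); rewrite ?inE enum_rankK_in.
Qed.

Lemma sd_D (R : nzRingType) (gT : finGroupType) n (x y c : gT) :
  (3 < n)%N -> <[x]> * <[y]> = [set: gT] -> y ^+ 2 = 1 -> 'Z([set: gT]) = [set 1; c] ->
  c \in <[x]> -> c != 1 -> c * c = 1 -> y \notin <[x]> -> x \notin 'Z([set: gT]) ->
  #[x] = (2 ^ n.-1)%N -> #|gT| = (2 ^ n)%N ->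
  exists S : {set 'I_#|ncV [set: gT]%G|}, exists p,
   [/\ good S p, #|S| = (2 ^ n.-1 - 2)%N, #|~: S| = (2 ^ n.-2 + 2 ^ n.-2)%N
     & nc_D [set: gT]%G R = Dg R S p].
Proof.
move=> n3 hXY hy2 hZ hcX hc1 hcc hyX hxZ ox cardT.
set G := [set: gT]%G.
have ZG : 'Z(G) = [set 1; c] by [].
have Z_X : 'Z(G) \subset <[x]>.
  by rewrite ZG; apply/subsetP => z; rewrite !inE => /orP[/eqP->|/eqP->] //; exact: group1.
have VE v : (v \in ncV G) = (v \notin 'Z(G)) by rewrite /ncV !inE andbT.
have hyV : y \in ncV G by rewrite VE; apply: contra hyX; apply: (subsetP Z_X).
pose S := [set i : 'I_#|ncV G| | nc_vert i \in <[x]>].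
pose p := fun i : 'I_#|ncV G| => enum_rank_in hyV (c * nc_vert i).
have vZ (i : 'I_#|ncV G|) : nc_vert i \notin 'Z(G) by rewrite -VE; exact: (enum_valP i).
have pE (i : 'I_#|ncV G|) : nc_vert i \notin <[x]> -> nc_vert (p i) = c * nc_vert i.
  move=> hv; rewrite /nc_vert /p enum_rankK_in // VE.
  by apply: contra hv => /(subsetP Z_X); rewrite groupMl.
have cXl v : (c * v \in <[x]>) = (v \in <[x]>) by rewrite groupMl.
have gd : good S p.
  move=> i; rewrite inE => hi; have hp := pE i hi.
  split.
  - by rewrite inE hp cXl.
  - apply/eqP => e; move: hp; rewrite e -{1}(mul1g (nc_vert i)) => /mulIg.
    by move/eqP; rewrite eq_sym (negbTE hc1).
  - apply: enum_val_inj; rewrite -/(nc_vert _) pE; last by rewrite hp cXl.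
    by rewrite hp mulgA hcc mul1g.
have cZ : #|'Z(G)| = 2%N by rewrite ZG cards2 eq_sym hc1.
have cV : #|ncV G| = (2 ^ n - 2)%N.
  rewrite /ncV cardsD (setIidPr (subsetT _)) cardsT cardT.
  by rewrite cZ.
have cS : #|S| = (2 ^ n.-1 - 2)%N.
  rewrite /S /nc_vert card_enum_pre.
  have -> : ncV G :&: <[x]> = <[x]> :\: 'Z(G).
    by apply/setP => v; rewrite !inE andbT andbC.
  by rewrite cardsD (setIidPr Z_X) cZ -ox.
have e1 : (2 ^ n = 4 * 2 ^ n.-2)%N.
  by case: n n3 {ox cardT cV cS} => [|[|[|n']]] //= _; rewrite !expnS; lia.
have e2 : (2 ^ n.-1 = 2 * 2 ^ n.-2)%N.
  by case: n n3 {ox cardT cV cS e1} => [|[|[|n']]] //= _; rewrite !expnS; lia.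
have e3 : (1 <= 2 ^ n.-2)%N by rewrite expn_gt0.
exists S, p; split => //.
  have h : (#|S| + #|~: S| = #|ncV G|)%N by rewrite cardsC card_ord.
  have h2 : #|~: S| = (#|ncV G| - #|S|)%N by rewrite -[X in (_ = X - _)%N]h addKn.
  rewrite h2 cS cV; lia.
have card2 : (2 < #|gT|)%N by rewrite cardT e1; lia.
have vV (i : 'I_#|ncV G|) : nc_vert i \in ncV G by exact: (enum_valP i).
have adjE a b : a \in ncV G -> b \in ncV G -> nc_adj G a b = (a * b != b * a).
  by move=> ha hb; rewrite /nc_adj ha hb.
have hxV : x \in ncV G by rewrite VE.
apply/matrixP => i j; rewrite !mxE; congr (_%:R)%R.
rewrite /dnat.
case: (eqVneq i j) => [<-|ij]; first by rewrite dist_0.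
have uv : nc_vert i != nc_vert j by rewrite /nc_vert (inj_eq enum_val_inj).
rewrite /S !inE.
case: (boolP (nc_vert i \in <[x]>)) => hi; case: (boolP (nc_vert j \in <[x]>)) => hj.
- apply: (dist_2 (w := y)) => //.
  + by rewrite adjE // negbK; apply/eqP; exact: (cyc_comm hi hj).
  + by rewrite adjE // (nc_XB hXY hy2 hi (vZ i) hyX).
  + by rewrite adjE // eq_sym (nc_XB hXY hy2 hj (vZ j) hyX).
- by apply: dist_1 => //; rewrite adjE // (nc_XB hXY hy2 hi (vZ i) hj).
- have -> : (j == p i) = false.
    by apply/negbTE; apply: contraTneq hj => ->; rewrite pE // cXl.
  by apply: dist_1 => //; rewrite adjE // eq_sym (nc_XB hXY hy2 hj (vZ j) hi).
have -> : (j == p i) = (nc_vert j == c * nc_vert i).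
  by rewrite -(pE i hi) /nc_vert (inj_eq enum_val_inj).
have bb := nc_BB hXY hy2 hZ hi hj.
case: (eqVneq (nc_vert j) (c * nc_vert i)) => e.
- apply: (dist_2 (w := x)) => //.
  + by rewrite adjE // negbK bb e eqxx orbT.
  + by rewrite adjE // eq_sym (nc_XB hXY hy2 (cycle_id x) hxZ hi).
  + by rewrite adjE // (nc_XB hXY hy2 (cycle_id x) hxZ hj).
- by apply: dist_1 => //; rewrite adjE // bb eq_sym (negbTE uv) (negbTE e).
Qed.

End GroupPart.

Unset Implicit Arguments.

Lemma ne_helper (R : numDomainType) (z a b : R) : a = b -> z != b -> z - a != 0.
Proof. by move=> ->; rewrite subr_eq0. Qed.

Lemma exp_n1 (R : comNzRingType) n : (1 < n)%N -> (2:R) ^+ n.-1 = 2 * 2 ^+ n.-2.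
Proof. by case: n => [|[|n']] //= _; rewrite exprS. Qed.

Lemma exp_n (R : comNzRingType) n : (1 < n)%N -> (2:R) ^+ n = 4 * 2 ^+ n.-2.
Proof. by case: n => [|[|n']] //= _; rewrite !exprS; ring. Qed.

Lemma expn_n1 n : (3 < n)%N -> (4 <= 2 ^ n.-1)%N.
Proof. by case: n => [|[|[|[|n']]]] //= _; rewrite !expnS; have := expn_gt0 2 n'; lia. Qed.

Theorem theorem4p3 (R : realFieldType) (n : nat) (t1 t2 : R) :
  (4 <= n)%N ->
  ((2 ^+ (n - 1) - 2) *: 'X^2 - (2 ^+ n - 10) *: 'X - (2 ^+ (n - 1))%:P
     = (2 ^+ (n - 1) - 2) *: (('X - t1%:P) * ('X - t2%:P)) :> {poly R}) ->
  char_poly (nc_DQ [set: gsort 'SD_(2 ^ n)]%G R) =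
      ('X - (2 ^+ n - 4)%:P) ^+ (2 ^ (n - 2))%N
    * ('X - (2 ^+ n - 2)%:P) ^+ (2 ^ (n - 2) - 1)%N
    * ('X - (2 ^+ n + 2 ^+ (n - 1) - 8)%:P) ^+ (2 ^ (n - 1) - 3)%N
    * ('X - (t1 * (2 ^+ (n - 1) - 2) + 3 * 2 ^+ (n - 1) - 2)%:P)
    * ('X - (t2 * (2 ^+ (n - 1) - 2) + 3 * 2 ^+ (n - 1) - 2)%:P).
Proof.
move=> n4 hpoly.
have n3 : (3 < n)%N by [].
have [x [y [c [[hXY hy2 hZ hcX hc1] [hcc hyX hxZ ox cT]]]]] :=
  @sd_setup (gsort 'SD_(2 ^ n)) n n3 (isog_refl _).
have [S [p [gd cS cC hD]]] := sd_D R n3 hXY hy2 hZ hcX hc1 hcc hyX hxZ ox cT.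
have -> : nc_DQ [set: gsort 'SD_(2 ^ n)]%G R = DQg R S p.
  by rewrite /nc_DQ /nc_transmission hD.
rewrite subn1 subn2 in hpoly *.
set k := (2 ^ n.-2)%N in cC *.
set h : R := 2 ^+ n.-2.
have p2n1 : (2 : R) ^+ n.-1 = 2 * h by rewrite /h exp_n1 //; lia.
have p2n : (2 : R) ^+ n = 4 * h by rewrite /h exp_n //; lia.
have kk : (k%:R : R) = h by rewrite /k natrX.
have hk1 : (1 <= k)%N by rewrite expn_gt0.
have hk4 := expn_n1 n n3.
have sR : (#|S|%:R : R) = 2 * h - 2 by rewrite cS natrB ?natrX ?p2n1 //; lia.
have s0 : (0 < #|S|)%N by rewrite cS; lia.
apply: (poly_eq_ev (e1 := 2 ^+ n + 2 ^+ n.-1 - 8) (e2 := 2 ^+ n - 2) (e3 := 2 ^+ n - 4)) => z h1 h2 h3.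
have ne1 : z - (#|S|%:R * 2 + k%:R * 2 - 4) != 0.
  by apply: ne_helper h1; rewrite sR kk p2n p2n1; ring.
have ne2 : z - (#|S|%:R + k%:R * 2) != 0.
  by apply: ne_helper h2; rewrite sR kk p2n; ring.
have ne3 : z - (#|S|%:R + k%:R * 2 - 2) != 0.
  by apply: ne_helper h3; rewrite sR kk p2n; ring.
rewrite (DQg_ev gd cC hk1 s0 ne1 ne2 ne3).
have ex1 : (#|S|.-1 = 2 ^ n.-1 - 3)%N by rewrite cS; lia.
rewrite ex1 subn1 !(hornerM, horner_exp, hornerXsubC).
have b1 : z - (#|S|%:R * 2 + k%:R * 2 - 4) = z - (2 ^+ n + 2 ^+ n.-1 - 8).
  by rewrite sR kk p2n p2n1; ring.
have b2 : z - (#|S|%:R + k%:R * 2) = z - (2 ^+ n - 2) by rewrite sR kk p2n; ring.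
have b3 : z - (#|S|%:R + k%:R * 2 - 2) = z - (2 ^+ n - 4) by rewrite sR kk p2n; ring.
rewrite b1 b2 b3.
have hq0 := congr1 (fun P => P.[0]) hpoly; have hq1 := congr1 (fun P => P.[1]) hpoly.
rewrite /= !(hornerD, hornerN, hornerZ, hornerC, hornerX, hornerXn, hornerM, hornerXsubC) in hq0 hq1.
rewrite p2n p2n1 in hq0 hq1.
have hp : (2 * h - 2) * (t1 * t2) = - (2 * h).
  transitivity ((2 * h - 2) * ((0 - t1) * (0 - t2))); first by ring.
  by rewrite -hq0; ring.
have hs : (2 * h - 2) * (t1 + t2) = 4 * h - 10.
  transitivity ((2 * h - 2) * ((0 - t1) * (0 - t2)) + (2 * h - 2) - (2 * h - 2) * ((1 - t1) * (1 - t2))).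
    by ring.
  by rewrite -hq0 -hq1; ring.
have q : (z - (#|S|%:R * 4 + k%:R * 2 - 4)) * (z - (#|S|%:R + k%:R * 4)) - k%:R * #|S|%:R * 2
   = (z - (t1 * (2 ^+ n.-1 - 2) + 3 * 2 ^+ n.-1 - 2)) * (z - (t2 * (2 ^+ n.-1 - 2) + 3 * 2 ^+ n.-1 - 2)).
  rewrite sR kk p2n1.
  have E : (z - (t1 * (2 * h - 2) + 3 * (2 * h) - 2)) * (z - (t2 * (2 * h - 2) + 3 * (2 * h) - 2))
     = z ^+ 2 - z * ((2 * h - 2) * (t1 + t2) + 2 * (3 * (2 * h) - 2))
       + (2 * h - 2) * ((2 * h - 2) * (t1 * t2)) + (3 * (2 * h) - 2) * ((2 * h - 2) * (t1 + t2))
       + (3 * (2 * h) - 2) ^+ 2 by ring.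
  rewrite E hs hp; ring.
rewrite q.
move: (_ ^+ (2 ^ n.-1 - 3)) (_ ^+ k.-1) (_ ^+ k) => P1 P2 P3.
ring.
Qed.
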